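(* Let $0<\bar\varepsilon<\varrho<\frac12$, let $H$ be a special atom, and let $\rho^-,\rho^+:\mathbb{R}^2\to[0,1]$ be CPwL maps such that \[ \rho^-(E(t))=t\ \text{ for } t\in[\bar\varepsilon,1],\qquad \rho^+(E(t))=t\ \text{ for } t\in[0,1-\bar\varepsilon]. \] For $\sigma,\tau\in\{-,+\}$ let $\rho^{\sigma,\tau}(z_1,z_2)=(\rho^\sigma(z_1),\rho^\tau(z_2))$ for $z_1,z_2\in\mathbb{R}^2$. Let $F$ be a CPwL map with $F(E(t))=E(r(t))$ on $[0,1]$ and let $z_n(x,y)=\bigl(F^n(E(x)),F^n(E(y))\bigr)$. Then for every $n\ge1$ and every $(x,y)\in[0,1]^2$, \[ H(R_n(x,y))=\min_{\sigma,\tau\in\{-,+\}} H\bigl(\rho^{\sigma,\tau}(z_n(x,y))\bigr). \] Consequently there exist constants $C_0,C_1>0$, independent of $n$ (depending only on $\bar\varepsilon,\varrho$, the maps $\rho^\pm,F,E$ and the local complexity of $H$), such that the function $(x,y)\mapsto H(R_n(x,y))$ on $[0,1]^2$ is the restriction of a network in $\Upsilon_{C_0,\,C_1 n}(\mathrm{ReLU};2,1)$ for all $n\ge1$.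
   Context: For integers $W,L,d,N\ge 1$, $\Upsilon_{W,L}(\mathrm{ReLU};d,N)$ denotes the set of functions $\mathbb{R}^d\to\mathbb{R}^N$ realized (exactly) by fully connected feed-forward ReLU networks of width $W$ and depth $L$. CPwL means continuous piecewise linear. $r:[0,1]\to[0,1]$ is $r(t)=2t-\lfloor 2t\rfloor$ for $t\in[0,1)$, $r(1)=1$; $R(x,y)=(r(x),r(y))$, $R_n=R^n$. $E:[0,1]\to\mathbb{R}^2$ is $E(t)=(3t,3t)$ for $0\le t\le\frac13$, $E(t)=(1,2-3t)$ for $\frac13\le t\le\frac23$, $E(t)=(3-3t,0)$ for $\frac23\le t\le1$. Special atom: for fixed $0<\varrho<\frac12$, a special atom is a compactly supported nonnegative CPwL function $H:\mathbb{R}^2\to[0,\infty)$ with $\operatorname{supp}H\subset[\varrho,1-\varrho]^2$. *)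

(* Defs.v *)
From HB Require Import structures.
From mathcomp Require Import all_boot all_order all_algebra.
From mathcomp Require Import all_classical all_reals all_analysis.
Set Implicit Arguments. Unset Strict Implicit. Unset Printing Implicit Defensive.
Import Order.TTheory GRing.Theory Num.Theory.
Import numFieldNormedType.Exports.
Local Open Scope classical_set_scope.
Local Open Scope ring_scope.

Section Defs.
Variable R : realType.

Definition vec2 (a b : R) : 'cV[R]_2 := \col_(i < 2) (if i == ord0 then a else b).

Definition cpwl (d : nat) (f : 'cV[R]_d -> R) : Prop :=
  continuous (f : 'cV[R]_d -> R) /\
  exists s : seq ('rV[R]_d * R),
    forall x, exists2 p, p \in s & f x = (p.1 *m x) ord0 ord0 + p.2.

Definition cpwl_vec (d N : nat) (f : 'cV[R]_d -> 'cV[R]_N) : Prop :=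
  forall i : 'I_N, cpwl (fun x => f x i ord0).

Definition relu_vec (m : nat) (v : 'cV[R]_m) : 'cV[R]_m :=
  map_mx (fun t => Num.max t 0) v.

(* Upsilon_{W,L}(ReLU; d, N): maps realized by a fully connected ReLU network with
   L >= 1 hidden layers, each of width W:
   x |-> Aout (relu (A_{L-1} ... relu (A_1 (relu (A_0 x + b_0)) + b_1) ...)) + bout *)
Definition relu_net (W L d N : nat) (f : 'cV[R]_d -> 'cV[R]_N) : Prop :=
  (0 < L)%N /\
  exists (A0 : 'M[R]_(W, d)) (b0 : 'cV[R]_W)
         (hid : seq ('M[R]_(W, W) * 'cV[R]_W))
         (Aout : 'M[R]_(N, W)) (bout : 'cV[R]_N),
    size hid = L.-1 /\
    forall x, f x = Aout *m (foldl (fun h p => relu_vec (p.1 *m h + p.2))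
                                   (relu_vec (A0 *m x + b0)) hid) + bout.

Definition rmap (t : R) : R :=
  if t == 1 then 1 else 2 * t - (Num.floor (2 * t))%:~R.

Definition Emap (t : R) : 'cV[R]_2 :=
  if t <= 3^-1 then vec2 (3 * t) (3 * t)
  else if t <= 2 / 3 then vec2 1 (2 - 3 * t)
  else vec2 (3 - 3 * t) 0.

Definition special_atom (varrho : R) (H : 'cV[R]_2 -> R) : Prop :=
  cpwl H /\ (forall z, 0 <= H z) /\
  compact (closure [set z | H z != 0]) /\
  closure [set z | H z != 0] `<=`
    [set z | varrho <= z ord0 ord0 <= 1 - varrho /\
             varrho <= z (lift ord0 ord0) ord0 <= 1 - varrho].

End Defs.

(* Main.v *)
Require Import Defs.
From HB Require Import structures.
From mathcomp Require Import all_boot all_order all_algebra.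
From mathcomp Require Import all_classical all_reals all_analysis.
From mathcomp Require Import ring lra zify.
Import Order.TTheory GRing.Theory Num.Theory.
Local Open Scope ring_scope.

Module Helpers.
Import numFieldNormedType.Exports.
Local Open Scope classical_set_scope.
Local Open Scope ring_scope.

Section OneD.
Variable R : realType.

Lemma foldr_min_le (T : eqType) (g : T -> R) (b : R) (l : seq T) :
  foldr (fun q acc => Num.min (g q) acc) b l <= b /\
  forall q, q \in l -> foldr (fun q acc => Num.min (g q) acc) b l <= g q.
Proof.
elim: l => [|p l [IH1 IH2]] /=; first by split => // q; rewrite in_nil.
split; first by rewrite ge_min IH1 orbT.
move=> q; rewrite in_cons => /orP [/eqP ->|ql]; first by rewrite ge_min lexx.
by rewrite ge_min IH2 ?orbT.
Qed.

Lemma foldr_min_att (T : eqType) (g : T -> R) (b : R) (l : seq T) :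
  foldr (fun q acc => Num.min (g q) acc) b l = b \/
  exists2 q, q \in l & foldr (fun q acc => Num.min (g q) acc) b l = g q.
Proof.
elim: l => [|p l IH] /=; first by left.
case: (leP (g p) (foldr (fun q acc => Num.min (g q) acc) b l)) => h.
  by right; exists p; rewrite ?mem_head.
idtac.
case: IH => [->|[q ql ->]]; first by left.
by right; exists q => //; rewrite in_cons ql orbT.
Qed.

Lemma unif_delta (T : eqType) (P : T -> R -> Prop) (l : seq T) :
  (forall q d d', 0 < d' <= d -> P q d -> P q d') ->
  (forall q, q \in l -> exists2 d, 0 < d & P q d) ->
  exists2 d, 0 < d & forall q, q \in l -> P q d.
Proof.
move=> Pm; elim: l => [|p l IH] H; first by exists 1 => // q; rewrite in_nil.
have [d1 d10 Hd1] := H p (mem_head _ _).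
have [d2 d20 Hd2] := IH (fun q ql => H q (ltac:(by rewrite in_cons ql orbT))).
exists (Num.min d1 d2); first by rewrite lt_min d10 d20.
move=> q; rewrite in_cons => /orP [/eqP ->|ql].
  by apply: Pm Hd1; rewrite lt_min d10 d20 ge_min lexx.
by apply: Pm (Hd2 q ql); rewrite lt_min d10 d20 ge_min lexx orbT.
Qed.

Definition sumabs (s : seq (R * R)) := foldr (fun q b => `|q.2| + b) 0 s.

Lemma sumabs_ge (s : seq (R*R)) : 0 <= sumabs s /\ forall q, q \in s -> `|q.2| <= sumabs s.
Proof.
elim: s => [|p s [IH1 IH2]] /=; first by split => // q; rewrite in_nil.
split; first by rewrite addr_ge0.
move=> q; rewrite in_cons => /orP [/eqP ->|qs]; first by rewrite lerDl.
by have := IH2 q qs; have := normr_ge0 p.2; lra.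
Qed.

Lemma oneD (phi : R -> R) (s : seq (R * R)) :
  (forall t e, 0 < e -> exists2 del, 0 < del &
      forall t', `|t' - t| < del -> `|phi t' - phi t| < e) ->
  (forall t, 0 <= t <= 1 -> exists2 q, q \in s & phi t = q.1 + t * q.2) ->
  exists2 q, q \in s & (phi 0 <= q.1) && (q.1 + q.2 <= phi 1).
Proof.
move=> pc ps.
apply: contrapT => Hn.
have H : forall q, q \in s -> phi 0 <= q.1 -> phi 1 < q.1 + q.2.
  move=> q qs h0; rewrite ltNge; apply/negP => h1; apply: Hn; exists q => //.
  by rewrite h0 h1.
pose a (q : R * R) t := q.1 + t * q.2.
have [q0 q0s Hq0] := ps 0 ltac:(by rewrite lexx ler01).
have Hq0' : phi 0 = q0.1 by rewrite Hq0 mul0r addr0.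
pose J0 := [seq q <- s | phi 0 <= q.1].
have q0J : q0 \in J0 by rewrite mem_filter q0s -Hq0' lexx.
pose m t := foldr (fun q acc => Num.min (a q t) acc) (a q0 t) J0.
have mle : forall t q, q \in J0 -> m t <= a q t.
  by move=> t q qJ; case: (foldr_min_le _ (fun q => a q t) (a q0 t) J0) => _; apply.
have matt : forall t, exists2 q, q \in J0 & m t = a q t.
  move=> t; rewrite /m; case: (foldr_min_att _ (fun q => a q t) (a q0 t) J0) => [->|//].
  by exists q0.
have m0 : m 0 = phi 0.
  apply/eqP; rewrite eq_le; apply/andP; split.
    by rewrite Hq0' (le_trans (mle 0 q0 q0J)) // /a mul0r addr0.
  have [q qJ ->] := matt 0; move: qJ; rewrite mem_filter /a mul0r addr0.
  by case/andP.
have m1 : phi 1 < m 1.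
  have [q qJ ->] := matt 1; move: qJ; rewrite mem_filter => /andP [h qs].
  by rewrite /a mul1r; apply: H.
pose B := sumabs s.
have [B0 HB] := sumabs_ge s.
have lip : forall t t', m t <= m t' + B * `|t - t'|.
  move=> t t'; have [q qJ ->] := matt t'.
  have qs : q \in s by move: qJ; rewrite mem_filter => /andP [].
  apply: (le_trans (mle t q qJ)); rewrite /a.
  have h1 : (t - t') * q.2 <= `|t - t'| * `|q.2| by rewrite -normrM ler_norm.
  have h2 : `|t - t'| * `|q.2| <= B * `|t - t'|.
    by rewrite mulrC ler_wpM2r // HB.
  have -> : q.1 + t * q.2 = q.1 + t' * q.2 + (t - t') * q.2 by rewrite mulrBl; lra.
  by rewrite lerD2l (le_trans h1 h2).
pose A := [set t | 0 <= t <= 1 /\ m t <= phi t].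
have A0 : A 0 by split; [rewrite lexx ler01 | rewrite m0].
have hsA : has_sup A by split; [exists 0 | exists 1 => t [/andP [_ ]]].
pose u := sup A.
have ub : forall t, A t -> t <= u by move=> t At; apply: sup_upper_bound.
have u0 : 0 <= u by exact: ub.
have u1 : u <= 1.
  apply: sup_le_ub; first by exists 0.
  by move=> t [/andP []].
have uA : m u <= phi u.
  rewrite leNgt; apply/negP => hlt.
  pose e := m u - phi u.
  have e0 : 0 < e by rewrite subr_gt0.
  have [d1 d10 Hd1] := pc u (e / 2) ltac:(by rewrite divr_gt0).
  pose d2 := e / (2 * (B + 1)).
  have d20 : 0 < d2 by rewrite divr_gt0 // mulr_gt0 // ltr_pwDr.
  have d2e : d2 * (B + 1) = e / 2.
    by rewrite /d2; field; apply: lt0r_neq0; rewrite /B; lra.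
  have [t At ht] := sup_adherent (ltac:(by rewrite lt_min d10 d20) : 0 < Num.min d1 d2) hsA.
  have tu : t <= u := ub t At.
  have dtu : `|t - u| < Num.min d1 d2 by rewrite distrC ger0_norm ?subr_ge0 // ltrBlDr -ltrBlDl.
  move: dtu; rewrite lt_min => /andP [dt1 dt2].
  have := Hd1 t dt1; have := lip u t; case: At => _ hmt.
  rewrite distrC in dt2.
  move=> hl hp.
  have hB : B * `|u - t| <= e / 2.
    rewrite -d2e; apply: (@le_trans _ _ (B * d2)).
      by apply: ler_wpM2l => //; exact: ltW.
    by rewrite mulrC; apply: ler_wpM2l; [exact: ltW | rewrite lerDl].
  have := ler_norm (phi t - phi u). rewrite /e in hB hp *.
  move: hl hmt hp hB; lra.
have ult1 : u < 1.
  rewrite lt_neqAle u1 andbT; apply/eqP => ue.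
  by move: uA m1; rewrite ue; lra.
have aft : forall t, u < t -> t <= 1 -> phi t < m t.
  move=> t ut t1; rewrite ltNge; apply/negP => h.
  have tA : A t by split => //; rewrite t1 andbT; exact: (le_trans u0 (ltW ut)).
  by have := ub t tA; rewrite leNgt ut.
have pig : exists2 k, k \in s & a k u = phi u /\
            exists t, [/\ u < t, t <= 1 & phi t = a k t].
  apply: contrapT => Hno.
  have Hd : forall q, q \in s -> exists2 d, 0 < d &
       forall t, u < t -> t < u + d -> t <= 1 -> phi t != a q t.
    move=> q qs.
    case: (pselect (a q u = phi u)) => hqu.
      exists 1 => // t ut _ t1; apply/negP => /eqP he; apply: Hno.
      by exists q => //; split => //; exists t.
    pose e := `|a q u - phi u|.
    have e0 : 0 < e by rewrite normr_gt0 subr_eq0; apply/eqP.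
    have [d1 d10 Hd1] := pc u (e / 2) ltac:(by rewrite divr_gt0).
    pose d2 := e / (2 * (`|q.2| + 1)).
    have d20 : 0 < d2 by rewrite divr_gt0 // mulr_gt0 // ltr_pwDr.
    have d2e : d2 * (`|q.2| + 1) = e / 2.
      by rewrite /d2; field; apply: lt0r_neq0; have := normr_ge0 q.2; lra.
    exists (Num.min d1 d2); first by rewrite lt_min d10 d20.
    move=> t ut tud _; apply/negP => /eqP he.
    have dtu : `|t - u| < Num.min d1 d2 by rewrite gtr0_norm ?subr_gt0 // ltrBlDl.
    move: dtu; rewrite lt_min => /andP [dt1 dt2].
    have hp := Hd1 t dt1.
    have ha : `|a q t - a q u| <= e / 2.
      have -> : a q t - a q u = (t - u) * q.2 by rewrite /a; ring.
      rewrite normrM -d2e.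
      apply: (@le_trans _ _ (d2 * `|q.2|)).
        by apply: ler_wpM2r => //; exact: ltW.
      by apply: ler_wpM2l; [exact: ltW | rewrite lerDl].
    have : e <= `|a q u - a q t| + `|a q t - phi u|.
      by have := ler_normD (a q u - a q t) (a q t - phi u); rewrite addrA subrK.
    move=> h; have h2 : `|a q t - phi u| = `|phi t - phi u| by rewrite he.
    move: h h2 hp ha; rewrite (distrC (a q u)); lra.
  pose P q d := forall t, u < t -> t < u + d -> t <= 1 -> phi t != a q t.
  have Pmon : forall q d d', 0 < d' <= d -> P q d -> P q d'.
    move=> q d d' /andP [d'0 dd] HP t ut tud t1.
    apply: HP => //.
    by apply: (lt_le_trans tud); rewrite lerD2l.
  have [d d0 Hdd] := @unif_delta _ P s Pmon Hd.
  pose t := u + Num.min d (1 - u) / 2.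
  have mp : 0 < Num.min d (1 - u) by rewrite lt_min d0 subr_gt0.
  have mle1 : Num.min d (1 - u) <= d by rewrite ge_min lexx.
  have mle2 : Num.min d (1 - u) <= 1 - u by rewrite ge_min lexx orbT.
  have ut : u < t by rewrite /t ltrDl divr_gt0.
  have tud : t < u + d by rewrite /t ltrD2l; move: mp mle1; lra.
  have t1 : t <= 1 by rewrite /t; move: mp mle2; lra.
  have t01 : 0 <= t <= 1 by rewrite t1 andbT; exact: (le_trans u0 (ltW ut)).
  have [q qs Hq] := ps t t01.
  by have := Hdd q qs t ut tud t1; rewrite Hq eqxx.
have [k ks [hku [t [ut t1 hkt]]]] := pig.
have [q' q'J hq'] := matt u.
have kJ : k \in J0.
  rewrite mem_filter ks andbT leNgt; apply/negP => hk.
  have hq'0 : phi 0 <= q'.1 by move: q'J; rewrite mem_filter => /andP [].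
  have h1 : a q' u <= a k u by rewrite -hq' hku.
  have h2 : a k t < a q' t.
    by rewrite -hkt; apply: (lt_le_trans (aft t ut t1)); exact: mle.
  move: h1 h2; rewrite /a => h1 h2.
  have c0 : 0 < q'.1 - k.1 by move: hk hq'0; lra.
  have g1 : (q'.1 - k.1) + u * (q'.2 - k.2) <= 0 by rewrite mulrBr; move: h1; lra.
  have g2 : 0 < (q'.1 - k.1) + t * (q'.2 - k.2) by rewrite mulrBr; move: h2; lra.
  move: c0 g1 g2; set c := q'.1 - k.1; set c1 := q'.2 - k.2 => c0 g1 g2.
  nra.
have := aft t ut t1; rewrite hkt; have := mle t k kJ; lra.
Qed.

End OneD.

Set Implicit Arguments. Unset Strict Implicit. Unset Printing Implicit Defensive.

Section Nets.
Variable R : realType.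

Lemma relu_pid (W W' : nat) (v : 'cV[R]_W) :
  relu_vec ((pid_mx W : 'M[R]_(W', W)) *m v) = pid_mx W *m relu_vec v.
Proof.
apply/matrixP => i j; rewrite !mxE.
case: (ltnP i W) => h.
  pose k0 : 'I_W := Ordinal h.
  have E : forall g : 'I_W -> R, \sum_k (pid_mx W : 'M[R]_(W', W)) i k * g k = g k0.
    move=> g; rewrite (bigD1 k0) //= big1 => [|k nk].
      by rewrite mxE /= eqxx h mul1r addr0.
    rewrite mxE; case: eqP => [e|]; last by rewrite mul0r.
    by exfalso; move/eqP: nk; apply; apply: val_inj.
  rewrite (E (fun k => v k j)) (E (fun k => (relu_vec v) k j)).
  by rewrite mxE.
have E : forall g : 'I_W -> R, \sum_k (pid_mx W : 'M[R]_(W', W)) i k * g k = 0.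
  move=> g; apply: big1 => k _; rewrite mxE.
  by rewrite (leq_gtF h) andbF mul0r.
by rewrite (E (fun k => v k j)) (E (fun k => (relu_vec v) k j)) maxxx.
Qed.

Lemma relu_col m k (a : 'cV[R]_m) (b : 'cV[R]_k) :
  relu_vec (col_mx a b) = col_mx (relu_vec a) (relu_vec b).
Proof. by rewrite /relu_vec map_col_mx. Qed.

Lemma net_widen W W' L d N (f : 'cV[R]_d -> 'cV[R]_N) :
  (W <= W')%N -> relu_net W L f -> relu_net W' L f.
Proof.
move=> le [L0 [A0 [b0 [hid [Aout [bout [sz Hf]]]]]]].
pose P : 'M[R]_(W', W) := pid_mx W.
have PtP : P^T *m P = 1%:M by rewrite /P tr_pid_mx pid_mx_id // pid_mx_1.
split => //.
exists (P *m A0), (P *m b0), (map (fun p => (P *m p.1 *m P^T, P *m p.2)) hid),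
  (Aout *m P^T), bout.
split; first by rewrite size_map.
move=> x; rewrite Hf.
have inv : forall h hs,
  foldl (fun h p => relu_vec (p.1 *m h + p.2)) (P *m h)
        (map (fun p => (P *m p.1 *m P^T, P *m p.2)) hs) =
  P *m foldl (fun h p => relu_vec (p.1 *m h + p.2)) h hs.
  move=> h hs; elim: hs h => [|p hs IH] h //=.
  by rewrite -IH -!mulmxA (mulmxA P^T) PtP mul1mx -mulmxDr relu_pid.
by rewrite -(mulmxA P A0 x) -mulmxDr relu_pid inv mulmxA -(mulmxA Aout) PtP mulmx1.
Qed.

Lemma net_comp W L1 L2 d m N (f : 'cV[R]_d -> 'cV[R]_m) (g : 'cV[R]_m -> 'cV[R]_N) :
  relu_net W L1 f -> relu_net W L2 g -> relu_net W (L1 + L2) (g \o f).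
Proof.
move=> [L10 [A0 [b0 [hid [Aout [bout [sz Hf]]]]]]].
move=> [L20 [A0' [b0' [hid' [Aout' [bout' [sz' Hg]]]]]]].
split; first by rewrite addn_gt0 L10.
exists A0, b0, (hid ++ (A0' *m Aout, A0' *m bout + b0') :: hid'), Aout', bout'.
split.
  rewrite size_cat /= sz sz'.
  by case: L1 L10 {sz Hf} => // L1 _; case: L2 L20 {sz' Hg} => // L2 _; rewrite addSn addnS.
move=> x; rewrite /= Hg Hf foldl_cat /=.
by rewrite mulmxDr !mulmxA addrA.
Qed.

Lemma net_pair W1 W2 L d m k (f : 'cV[R]_d -> 'cV[R]_m) (g : 'cV[R]_d -> 'cV[R]_k) :
  relu_net W1 L f -> relu_net W2 L g ->
  relu_net (W1 + W2) L (fun x => col_mx (f x) (g x)).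
Proof.
move=> [L10 [A0 [b0 [hid [Aout [bout [sz Hf]]]]]]].
move=> [_ [A0' [b0' [hid' [Aout' [bout' [sz' Hg]]]]]]].
split => //.
exists (col_mx A0 A0'), (col_mx b0 b0'),
  (map (fun pq => (block_mx pq.1.1 0 0 pq.2.1, col_mx pq.1.2 pq.2.2)) (zip hid hid')),
  (block_mx Aout 0 0 Aout'), (col_mx bout bout').
split; first by rewrite size_map size_zip sz sz' minnn.
have inv : forall (hs : seq ('M[R]_W1 * 'cV[R]_W1)) (hs' : seq ('M[R]_W2 * 'cV[R]_W2)) hu hd,
  size hs = size hs' ->
  foldl (fun h p => relu_vec (p.1 *m h + p.2)) (col_mx hu hd)
    (map (fun pq => (block_mx pq.1.1 0 0 pq.2.1, col_mx pq.1.2 pq.2.2)) (zip hs hs')) =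
  col_mx (foldl (fun h p => relu_vec (p.1 *m h + p.2)) hu hs)
         (foldl (fun h p => relu_vec (p.1 *m h + p.2)) hd hs').
  elim=> [|p hs IH] [|p' hs'] hu hd //= [e].
  by rewrite -IH // mul_block_col !mul0mx addr0 add0r add_col_mx relu_col.
move=> x; rewrite Hf Hg [col_mx A0 A0' *m x]mul_col_mx add_col_mx relu_col inv ?sz ?sz' //.
by rewrite mul_block_col !mul0mx addr0 add0r add_col_mx.
Qed.

Lemma relu_sub m (x : 'cV[R]_m) : relu_vec x - relu_vec (- x) = x.
Proof.
apply/matrixP => i j; rewrite !mxE.
set t := x i j; case: (boolP (0 <= t)) => h.
  by rewrite (max_l h) max_r ?oppr_le0 // subr0.
rewrite -ltNge in h.
by rewrite max_r ?(ltW h) // max_l ?oppr_ge0 ?(ltW h) // sub0r opprK.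
Qed.

Lemma net_aff d N (A : 'M[R]_(N, d)) (b : 'cV[R]_N) :
  relu_net (d + d) 1 (fun x => A *m x + b).
Proof.
split => //.
exists (col_mx 1%:M (- 1%:M)), 0, [::], (row_mx A (- A)), b.
split => // x /=.
rewrite addr0 mul_col_mx mulNmx !mul1mx relu_col mul_row_col mulNmx -mulmxN.
by rewrite -mulmxDr relu_sub.
Qed.

Lemma net_relu N : relu_net N 1 (@relu_vec R N).
Proof.
split => //; exists 1%:M, 0, [::], 1%:M, 0; split => // x /=.
by rewrite mul1mx addr0 mul1mx addr0.
Qed.

Lemma net_deepen1 W L d N (f : 'cV[R]_d -> 'cV[R]_N) :
  (N + N <= W)%N -> relu_net W L f -> relu_net W L.+1 f.
Proof.
move=> le Hf.
have Hid := net_widen le (net_aff 1%:M (0 : 'cV[R]_N)).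
have := net_comp Hf Hid; rewrite addn1.
case=> L0 [A0 [b0 [hid [Ao [bo [sz H]]]]]].
split => //; exists A0, b0, hid, Ao, bo; split => // x.
by rewrite -H /= mul1mx addr0.
Qed.

Lemma net_deepen W L L' d N (f : 'cV[R]_d -> 'cV[R]_N) :
  (N + N <= W)%N -> (L <= L')%N -> relu_net W L f -> relu_net W L' f.
Proof.
move=> le /subnK <-; elim: (L' - L)%N => [|k IH] H; first by rewrite add0n.
by rewrite addSn; apply: net_deepen1 => //; apply: IH.
Qed.

Definition NN d N (f : 'cV[R]_d -> 'cV[R]_N) := exists W L, relu_net W L f.

Lemma NN_ext d N (f g : 'cV[R]_d -> 'cV[R]_N) : NN f -> (forall x, f x = g x) -> NN g.
Proof.
move=> [W [L [L0 [A0 [b0 [hid [Ao [bo [sz H]]]]]]]]] e.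
by exists W, L; split => //; exists A0, b0, hid, Ao, bo; split => // x; rewrite -e.
Qed.

Lemma NN_comp d m N (f : 'cV[R]_d -> 'cV[R]_m) (g : 'cV[R]_m -> 'cV[R]_N) :
  NN f -> NN g -> NN (g \o f).
Proof.
move=> [W1 [L1 H1]] [W2 [L2 H2]]; exists (maxn W1 W2), (L1 + L2).
by apply: net_comp; [apply: (net_widen _ H1) | apply: (net_widen _ H2)];
  rewrite ?leq_maxl ?leq_maxr.
Qed.

Lemma NN_pair d m k (f : 'cV[R]_d -> 'cV[R]_m) (g : 'cV[R]_d -> 'cV[R]_k) :
  NN f -> NN g -> NN (fun x => col_mx (f x) (g x)).
Proof.
move=> [W1 [L1 H1]] [W2 [L2 H2]].
pose W := maxn (maxn W1 W2) (maxn (m + m) (k + k)).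
exists (W + W), (maxn L1 L2).
apply: net_pair.
  apply: (net_deepen (L:=L1)); [|exact: leq_maxl|apply: (net_widen _ H1)].
    by rewrite /W (leq_trans (leq_maxl _ (k + k))) // leq_maxr.
  by rewrite /W (leq_trans (leq_maxl _ W2)) // leq_maxl.
apply: (net_deepen (L:=L2)); [|exact: leq_maxr|apply: (net_widen _ H2)].
  by rewrite /W (leq_trans (leq_maxr (m + m) _)) // leq_maxr.
by rewrite /W (leq_trans (leq_maxr W1 _)) // leq_maxl.
Qed.

Lemma NN_aff d N (A : 'M[R]_(N, d)) (b : 'cV[R]_N) : NN (fun x => A *m x + b).
Proof. by exists (d + d), 1%N; apply: net_aff. Qed.

Lemma NN_relu N : NN (@relu_vec R N).
Proof. by exists N, 1%N; apply: net_relu. Qed.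

End Nets.

Section Scalar.
Variable R : realType.

Definition sc (a : R) : 'cV[R]_1 := const_mx a.

Definition NS d (f : 'cV[R]_d -> R) := NN (fun x => sc (f x)).

Lemma NS_ext d (f g : 'cV[R]_d -> R) : NS f -> (forall x, f x = g x) -> NS g.
Proof. by move=> H e; apply: NN_ext H _ => x; rewrite e. Qed.

Lemma NS_aff d (p : 'rV[R]_d) (c : R) : NS (fun x => (p *m x) ord0 ord0 + c).
Proof.
apply: NN_ext (NN_aff p (sc c)) _ => x.
by apply/matrixP => i j; rewrite !ord1 !mxE.
Qed.

Lemma NS_coord d (i : 'I_d) : NS (fun x : 'cV[R]_d => x i ord0).
Proof.
apply: NS_ext (NS_aff (delta_mx 0 i) 0) _ => x.
by rewrite -rowE addr0 mxE.
Qed.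

Lemma NS_lin2 d (f g : 'cV[R]_d -> R) (a b c : R) :
  NS f -> NS g -> NS (fun x => a * f x + b * g x + c).
Proof.
move=> Hf Hg.
have := NN_comp (NN_pair Hf Hg) (NN_aff (row_mx (sc a) (sc b)) (sc c)).
move=> H; apply: NN_ext H _ => x /=.
rewrite mul_row_col; apply/matrixP => i j; rewrite !ord1 !mxE !big_ord1 !mxE.
by [].
Qed.

Lemma NS_relu d (f : 'cV[R]_d -> R) : NS f -> NS (fun x => Num.max (f x) 0).
Proof.
move=> Hf; apply: NN_ext (NN_comp Hf (@NN_relu R 1)) _ => x /=.
by apply/matrixP => i j; rewrite !mxE.
Qed.

Lemma NS_min d (f g : 'cV[R]_d -> R) : NS f -> NS g -> NS (fun x => Num.min (f x) (g x)).
Proof.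
move=> Hf Hg.
have H1 := NS_relu (NS_lin2 1 (-1) 0 Hf Hg).
apply: NS_ext (NS_lin2 1 (-1) 0 Hf H1) _ => x /=.
rewrite !mul1r !mulN1r !addr0.
case: (leP (f x) (g x)) => h.
  by rewrite max_r ?subr_le0 // subr0.
by rewrite max_l ?subr_ge0 ?(ltW h) // opprB addrC subrK.
Qed.

Lemma NS_max d (f g : 'cV[R]_d -> R) : NS f -> NS g -> NS (fun x => Num.max (f x) (g x)).
Proof.
move=> Hf Hg.
have H1 := NS_relu (NS_lin2 1 (-1) 0 Hg Hf).
apply: NS_ext (NS_lin2 1 1 0 Hf H1) _ => x /=.
rewrite !mul1r !mulN1r !addr0.
case: (leP (f x) (g x)) => h.
  by rewrite max_l ?subr_ge0 // addrC subrK.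
by rewrite max_r ?subr_le0 ?(ltW h) // addr0.
Qed.

Lemma NS_comp d m (G : 'cV[R]_d -> 'cV[R]_m) (h : 'cV[R]_m -> R) :
  NN G -> NS h -> NS (fun x => h (G x)).
Proof. by move=> HG Hh; apply: NN_comp HG Hh. Qed.

Lemma NN_vec2 d (f g : 'cV[R]_d -> R) : NS f -> NS g -> NN (fun x => vec2 (f x) (g x)).
Proof.
move=> Hf Hg; apply: NN_ext (NN_pair Hf Hg) _ => x.
apply/matrixP => i j; rewrite !ord1 !mxE.
case: splitP => k ik; rewrite !mxE.
  by case: eqP => // ne; exfalso; apply: ne; apply: val_inj; rewrite /= ik ord1.
by case: eqP => // e; move: ik; rewrite e.
Qed.

Lemma NS_foldr_min (T : Type) d (g : T -> 'cV[R]_d -> R) (b : 'cV[R]_d -> R) l :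
  (forall q, NS (g q)) -> NS b ->
  NS (fun y => foldr (fun q a => Num.min (g q y) a) (b y) l).
Proof.
move=> Hg Hb; elim: l => [|q l IH] //=.
exact: NS_min (Hg q) IH.
Qed.

Lemma NS_foldr_max (T : Type) d (g : T -> 'cV[R]_d -> R) (b : 'cV[R]_d -> R) l :
  (forall q, NS (g q)) -> NS b ->
  NS (fun y => foldr (fun q a => Num.max (g q y) a) (b y) l).
Proof.
move=> Hg Hb; elim: l => [|q l IH] //=.
exact: NS_max (Hg q) IH.
Qed.

End Scalar.

Section Repr.
Variable R : realType.

Lemma seg_cont d (f : 'cV[R]_d -> R) (x y : 'cV[R]_d) :
  continuous f -> forall t e : R, 0 < e -> exists2 del : R, 0 < del &
   forall t', `|t' - t| < del -> `|f (x + t' *: (y - x)) - f (x + t *: (y - x))| < e.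
Proof.
move=> fc t e e0.
have hc : {for t, continuous (fun s : R => f (x + s *: (y - x)))}.
  apply: continuous_comp; last exact: fc.
  apply: continuousD; first exact: cvg_cst.
  apply: continuousZr_tmp. exact: cvg_id.
move/cvgrPdist_lt: hc => /(_ e e0) /nbhs_ballP [del del0 Hd].
exists del => // t' Ht'.
rewrite distrC. apply: Hd. rewrite /ball /= distrC. done.
Qed.

Definition aff d (p : 'rV[R]_d * R) (x : 'cV[R]_d) := (p.1 *m x) ord0 ord0 + p.2.

Lemma aff_seg d (p : 'rV[R]_d * R) x w t :
  aff p (x + t *: w) = aff p x + t * (p.1 *m w) ord0 ord0.
Proof. by rewrite /aff mulmxDr -scalemxAr !mxE; ring. Qed.

Lemma keyv d (f : 'cV[R]_d -> R) (s : seq ('rV[R]_d * R)) :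
  continuous f -> (forall x, exists2 p, p \in s & f x = aff p x) ->
  forall x y, exists2 p, p \in s & (f x <= aff p x) && (aff p y <= f y).
Proof.
move=> fc Hs x y.
pose g (p : 'rV[R]_d * R) := (aff p x, (p.1 *m (y - x)) ord0 ord0).
have := @oneD R (fun t => f (x + t *: (y - x))) (map g s) (seg_cont x y fc).
case.
- move=> t _; have [p ps ->] := Hs (x + t *: (y - x)).
  by exists (g p); [exact: map_f | rewrite aff_seg].
move=> q /mapP [p ps ->] /=.
rewrite scale0r addr0 scale1r (addrC x (y - x)) subrK => h.
exists p => //.
by have := aff_seg p x (y - x) 1; rewrite scale1r mul1r (addrC x (y - x)) subrK => ->.
Qed.

Fixpoint pl (T : Type) (s : seq T) : seq (seq T) :=
  if s is x :: s' then pl s' ++ map (cons x) (pl s') else [:: [::]].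

Lemma filter_pl (T : eqType) (P : pred T) (s : seq T) : [seq x <- s | P x] \in pl s.
Proof.
elim: s => [|x s IH] /=; first by rewrite mem_seq1.
by case: (P x); rewrite mem_cat ?IH // (map_f _ IH) orbT.
Qed.

Lemma foldr_max_ge (T : eqType) (g : T -> R) (b : R) (l : seq T) :
  b <= foldr (fun q acc => Num.max (g q) acc) b l /\
  forall q, q \in l -> g q <= foldr (fun q acc => Num.max (g q) acc) b l.
Proof.
elim: l => [|p l [IH1 IH2]] /=; first by split => // q; rewrite in_nil.
split; first by rewrite le_max IH1 orbT.
move=> q; rewrite in_cons => /orP [/eqP ->|ql]; first by rewrite le_max lexx.
by rewrite le_max IH2 ?orbT.
Qed.

Lemma foldr_max_le (T : eqType) (g : T -> R) (b c : R) (l : seq T) :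
  b <= c -> (forall q, q \in l -> g q <= c) ->
  foldr (fun q acc => Num.max (g q) acc) b l <= c.
Proof.
move=> bc; elim: l => [|p l IH] H //=.
by rewrite ge_max H ?mem_head // IH // => q ql; apply: H; rewrite in_cons ql orbT.
Qed.

Lemma repr d (f : 'cV[R]_d -> R) : cpwl f -> NS f.
Proof.
move=> [fc [s Hs]].
have Hs' : forall x, exists2 p, p \in s & f x = aff p x by exact: Hs.
pose p0 : 'rV[R]_d * R := (0, 0).
pose Sof x := [seq p <- s | f x <= aff p x].
pose mS (S : seq ('rV[R]_d * R)) y :=
  foldr (fun p a => Num.min (aff p y) a) (aff (head p0 S) y) S.
have NSm : forall S, NS (mS S).
  move=> S; apply: NS_foldr_min => [q|]; exact: NS_aff.
have mSle : forall S y p, p \in S -> mS S y <= aff p y.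
  move=> S y p pS.
  by case: (@foldr_min_le R _ (fun p => aff p y) (aff (head p0 S) y) S) => _; apply.
have mSge : forall S y c, S != [::] -> (forall p, p \in S -> c <= aff p y) -> c <= mS S y.
  move=> S y c Sn H.
  case: (@foldr_min_att R _ (fun p => aff p y) (aff (head p0 S) y) S) => [e|[q qS e]];
    rewrite /mS e; apply: H => //.
  by case: S Sn {e} => // a S _; rewrite mem_head.
have Sval : forall x y, mS (Sof x) y <= f y.
  move=> x y; have [p ps /andP [h1 h2]] := keyv fc Hs' x y.
  apply: le_trans h2; apply: mSle; by rewrite mem_filter h1.
have Sge : forall y, f y <= mS (Sof y) y.
  move=> y; apply: mSge.
    have [p ps e] := Hs' y.
    apply/eqP => e'; have : p \in Sof y by rewrite mem_filter ps e lexx.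
    by rewrite e'.
  by move=> p; rewrite mem_filter => /andP [].
pose Ms := [seq S <- pl s | `[< forall y, mS S y <= f y >]].
pose F y := foldr (fun S a => Num.max (mS S y) a) (mS (Sof 0) y) Ms.
have NSF : NS F by apply: NS_foldr_max.
apply: NS_ext NSF _ => y; apply/eqP; rewrite eq_le; apply/andP; split.
  apply: foldr_max_le => // S; rewrite mem_filter => /andP [/asboolP h _].
  exact: h.
have [_ H] := foldr_max_ge (fun S => mS S y) (mS (Sof 0) y) Ms.
apply: le_trans (Sge y) (H _ _).
by rewrite mem_filter filter_pl andbT; apply/asboolP.
Qed.

Lemma I2cases (i : 'I_2) : i = ord0 \/ i = lift ord0 ord0.
Proof.
case: i => [[|[|k]] hk]; [left|right|by []]; exact: val_inj.
Qed.

Lemma repr_vec2 (F : 'cV[R]_2 -> 'cV[R]_2) : cpwl_vec F -> NN F.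
Proof.
move=> HF.
apply: NN_ext (NN_vec2 (repr (HF ord0)) (repr (HF (lift ord0 ord0)))) _ => x.
apply/matrixP => i j; rewrite ord1 mxE.
by rewrite (ord1 j); case: (I2cases i) => ->.
Qed.

End Repr.

Section Final.
Variable R : realType.

Lemma rmap01 (t : R) : 0 <= t <= 1 -> 0 <= rmap t <= 1.
Proof.
move=> /andP [t0 t1]; rewrite /rmap; case: eqP => [_|_]; first by rewrite ler01 lexx.
have h1 := floor_le (2 * t).
have : Num.floor (2 * t) < Num.floor (2 * t) + 1 by rewrite ltrDl.
rewrite floor_lt_int intrD => h2.
apply/andP; split; first by rewrite subr_ge0.
move: h2; set k := (Num.floor (2 * t))%:~R; rewrite /= => h2.
lra.
Qed.

Lemma iter_rmap01 n (t : R) : 0 <= t <= 1 -> 0 <= iter n (@rmap R) t <= 1.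
Proof. by move=> h; elim: n => [|n IH] //=; apply: rmap01. Qed.

Lemma vec2_0 (a b : R) : vec2 a b ord0 ord0 = a.
Proof. by rewrite mxE. Qed.
Lemma vec2_1 (a b : R) : vec2 a b (lift ord0 ord0) ord0 = b.
Proof. by rewrite mxE. Qed.

Lemma minlemma (h : R -> R -> R) (vr u v a1 a2 b1 b2 : R) :
  (forall a b, 0 <= h a b) ->
  (forall a b, (a < vr \/ 1 - vr < a) \/ (b < vr \/ 1 - vr < b) -> h a b = 0) ->
  (a1 = u /\ a2 = u) \/ ((a1 = u \/ a2 = u) /\ (u < vr \/ 1 - vr < u)) ->
  (b1 = v /\ b2 = v) \/ ((b1 = v \/ b2 = v) /\ (v < vr \/ 1 - vr < v)) ->
  h u v = Num.min (Num.min (h a1 b1) (h a1 b2)) (Num.min (h a2 b1) (h a2 b2)).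
Proof.
move=> h0 hz ha hb.
have M0 : forall p q r w, 0 <= Num.min (Num.min (h p q) (h p r)) (Num.min (h w q) (h w r)).
  by move=> p q r w; rewrite !le_min !h0.
case: ha => [[-> ->]|[ha hu]].
  case: hb => [[-> ->]|[hb hv]]; first by rewrite !minxx.
  rewrite hz; last by right.
  apply/eqP; rewrite eq_le M0 /=.
  have z : h u v = 0 by apply: hz; right.
  by case: hb => ->; rewrite !ge_min z lexx ?orbT.
rewrite hz; last by left.
apply/eqP; rewrite eq_le M0 /=.
have z : forall w, h u w = 0 by move=> w; apply: hz; left.
by case: ha => ->; rewrite !ge_min !z lexx ?orbT.
Qed.

Lemma Hzero (vr : R) (H : 'cV[R]_2 -> R) : special_atom vr H ->
  forall a b, (a < vr \/ 1 - vr < a) \/ (b < vr \/ 1 - vr < b) -> H (vec2 a b) = 0.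
Proof.
move=> [_ [_ [_ Hs]]] a b hab; apply/eqP; apply: contrapT => /negP hn.
have [/andP [h1 h2] /andP [h3 h4]] := Hs (vec2 a b) (@subset_closure _ [set z | H z != 0] (vec2 a b) hn).
rewrite vec2_0 vec2_1 in h1 h2 h3 h4.
by case: hab => [[]|[]]; lra.
Qed.

Definition e1 (t : R) := 3 * t + (-3) * Num.max (t - 3^-1) 0 + (-3) * Num.max (t - 2 / 3) 0.
Definition e2 (t : R) := 3 * t + (-6) * Num.max (t - 3^-1) 0 + 3 * Num.max (t - 2 / 3) 0.

Lemma Emap_formula (t : R) : Emap t = vec2 (e1 t) (e2 t).
Proof.
have h3 : 3 * 3^-1 = 1 :> R by rewrite mulfV.
have h23 : 2 / 3 = 2 * 3^-1 :> R by [].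
rewrite /Emap /e1 /e2 h23.
case: (boolP (t <= 3^-1)) => h1.
  rewrite (max_r (_ : t - 3^-1 <= 0)); last by lra.
  rewrite (max_r (_ : t - 2 * 3^-1 <= 0)); last by lra.
  congr vec2; lra.
case: (boolP (t <= 2 * 3^-1)) => h2.
  rewrite (max_l (_ : 0 <= t - 3^-1)); last by lra.
  rewrite (max_r (_ : t - 2 * 3^-1 <= 0)); last by lra.
  congr vec2; lra.
rewrite (max_l (_ : 0 <= t - 3^-1)); last by lra.
rewrite (max_l (_ : 0 <= t - 2 * 3^-1)); last by lra.
congr vec2; lra.
Qed.

Lemma NN_Emap_coord d (i : 'I_d) : NN (fun v : 'cV[R]_d => Emap (v i ord0)).
Proof.
have Hc := @NS_coord R d i.
have r1 := NS_relu (NS_lin2 1 0 (- 3^-1) Hc Hc).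
have r2 := NS_relu (NS_lin2 1 0 (- (2 / 3)) Hc Hc).
have E1 := NS_lin2 1 (-3) 0 (NS_lin2 3 (-3) 0 Hc r1) r2.
have E2 := NS_lin2 1 3 0 (NS_lin2 3 (-6) 0 Hc r1) r2.
apply: NN_ext (NN_vec2 E1 E2) _ => v.
rewrite Emap_formula /e1 /e2; congr vec2; rewrite !mul1r !mul0r !addr0; ring.
Qed.

Lemma NN_usub : NN (fun z : 'cV[R]_(2 + 2) => usubmx z).
Proof.
apply: NN_ext (NN_aff (row_mx 1%:M 0) 0) _ => z.
by rewrite -[z in _ *m z]vsubmxK mul_row_col mul1mx mul0mx !addr0.
Qed.

Lemma NN_dsub : NN (fun z : 'cV[R]_(2 + 2) => dsubmx z).
Proof.
apply: NN_ext (NN_aff (row_mx 0 1%:M) 0) _ => z.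
by rewrite -[z in _ *m z]vsubmxK mul_row_col mul1mx mul0mx add0r addr0.
Qed.

End Final.

End Helpers.
Import Helpers.

Theorem mainTheorem8 (R : realType) (epsb varrho : R)
  (H : 'cV[R]_2 -> R) (rhom rhop : 'cV[R]_2 -> R) (F : 'cV[R]_2 -> 'cV[R]_2) :
  0 < epsb -> epsb < varrho -> varrho < 2^-1 ->
  special_atom varrho H ->
  cpwl rhom -> (forall z, 0 <= rhom z <= 1) ->
  cpwl rhop -> (forall z, 0 <= rhop z <= 1) ->
  (forall t, epsb <= t <= 1 -> rhom (Emap t) = t) ->
  (forall t, 0 <= t <= 1 - epsb -> rhop (Emap t) = t) ->
  cpwl_vec F ->
  (forall t, 0 <= t <= 1 -> F (Emap t) = Emap (rmap t)) ->
  (forall (n : nat) (x y : R), (1 <= n)%N -> 0 <= x <= 1 -> 0 <= y <= 1 ->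
     let z1 := iter n F (Emap x) in
     let z2 := iter n F (Emap y) in
     H (vec2 (iter n (@rmap R) x) (iter n (@rmap R) y)) =
       Num.min (Num.min (H (vec2 (rhom z1) (rhom z2))) (H (vec2 (rhom z1) (rhop z2))))
               (Num.min (H (vec2 (rhop z1) (rhom z2))) (H (vec2 (rhop z1) (rhop z2))))) /\
  (exists C0 C1 : nat, (0 < C0)%N /\ (0 < C1)%N /\
     forall n : nat, (1 <= n)%N ->
       exists Phi : 'cV[R]_2 -> 'cV[R]_1,
         relu_net C0 (C1 * n) Phi /\
         forall x y : R, 0 <= x <= 1 -> 0 <= y <= 1 ->
           Phi (vec2 x y) ord0 ord0 = H (vec2 (iter n (@rmap R) x) (iter n (@rmap R) y))).
Proof.
move=> he hev hv2 HH Hm Hm01 Hp Hp01 HmE HpE HF HFE.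
have E1 : forall n x, 0 <= x <= 1 -> iter n F (Emap x) = Emap (iter n (@rmap R) x).
  move=> n x hx; elim: n => [|n IH] //=.
  by rewrite IH HFE // iter_rmap01.
have Hsplit : forall u, 0 <= u <= 1 ->
   (rhom (Emap u) = u /\ rhop (Emap u) = u) \/
   ((rhom (Emap u) = u \/ rhop (Emap u) = u) /\ (u < varrho \/ 1 - varrho < u)).
  move=> u /andP [u0 u1].
  case: (boolP (u < epsb)) => h.
    right; split; last by left; lra.
    by right; apply: HpE; apply/andP; split; lra.
  rewrite -leNgt in h.
  case: (boolP (1 - epsb < u)) => h'.
    right; split; last by right; lra.
    by left; apply: HmE; apply/andP; split; lra.
  rewrite -leNgt in h'.
  by left; split; [apply: HmE|apply: HpE]; apply/andP; split; lra.
have [HHc [HH0 _]] := HH.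
have part1 : forall n x y, 0 <= x <= 1 -> 0 <= y <= 1 ->
   H (vec2 (iter n (@rmap R) x) (iter n (@rmap R) y)) =
   Num.min (Num.min (H (vec2 (rhom (iter n F (Emap x))) (rhom (iter n F (Emap y)))))
                    (H (vec2 (rhom (iter n F (Emap x))) (rhop (iter n F (Emap y))))))
           (Num.min (H (vec2 (rhop (iter n F (Emap x))) (rhom (iter n F (Emap y)))))
                    (H (vec2 (rhop (iter n F (Emap x))) (rhop (iter n F (Emap y)))))).
  move=> n x y hx hy; rewrite !E1 //.
  apply: (@minlemma R (fun a b => H (vec2 a b)) varrho).
  - by move=> a b; apply: HH0.
  - exact: Hzero HH.
  - by apply: Hsplit; apply: iter_rmap01.
  - by apply: Hsplit; apply: iter_rmap01.
split; first by move=> n x y _ hx hy; apply: part1.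
pose E2f (v : 'cV[R]_2) : 'cV[R]_(2 + 2) :=
  col_mx (Emap (v ord0 ord0)) (Emap (v (lift ord0 ord0) ord0)).
pose Gf (z : 'cV[R]_(2 + 2)) : 'cV[R]_(2 + 2) := col_mx (F (usubmx z)) (F (dsubmx z)).
pose Kf (z : 'cV[R]_(2 + 2)) : R :=
  Num.min (Num.min (H (vec2 (rhom (usubmx z)) (rhom (dsubmx z))))
                   (H (vec2 (rhom (usubmx z)) (rhop (dsubmx z)))))
          (Num.min (H (vec2 (rhop (usubmx z)) (rhom (dsubmx z))))
                   (H (vec2 (rhop (usubmx z)) (rhop (dsubmx z))))).
have NE : NN E2f.
  have := NN_pair (@NN_Emap_coord R 2 ord0) (@NN_Emap_coord R 2 (lift ord0 ord0)).
  by move/NN_ext; apply.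
have NG : NN Gf.
  have := NN_pair (NN_comp (@NN_usub R) (repr_vec2 HF))
                         (NN_comp (@NN_dsub R) (repr_vec2 HF)).
  by move/NN_ext; apply.
have NK : NS Kf.
  have NSr : forall r1 r2, cpwl r1 -> cpwl r2 ->
     NS (fun z : 'cV[R]_(2 + 2) => H (vec2 (r1 (usubmx z)) (r2 (dsubmx z)))).
    move=> r1 r2 h1 h2.
    apply: NS_comp (repr HHc).
    exact: NN_vec2 (NS_comp (@NN_usub R) (repr h1)) (NS_comp (@NN_dsub R) (repr h2)).
  by apply: NS_min; apply: NS_min; apply: NSr.
have [W1 [L1 N1]] := NE.
have [W2 [L2 N2]] := NG.
have [W3 [L3 N3]] := NK.
pose W := maxn (maxn W1 W2) (maxn W3 2).
have W1W : (W1 <= W)%N by rewrite /W; lia.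
have W2W : (W2 <= W)%N by rewrite /W; lia.
have W3W : (W3 <= W)%N by rewrite /W; lia.
have W2' : (1 + 1 <= W)%N by rewrite /W; lia.
have L10 : (0 < L1)%N by case: N1.
exists W, (L1 + L2 + L3)%N.
split; first by rewrite /W; lia.
split; first by lia.
move=> n n1.
have chain : forall k, relu_net W (L1 + k * L2) (fun v => iter k Gf (E2f v)).
  elim=> [|k IH]; first by rewrite mul0n addn0; exact: net_widen W1W N1.
  have := net_comp IH (net_widen W2W N2).
  by have -> : (L1 + k.+1 * L2 = L1 + k * L2 + L2)%N by rewrite mulSn; lia.
have Nf := net_comp (chain n) (net_widen W3W N3).
exists (fun v => sc (Kf (iter n Gf (E2f v)))).
split.
  apply: (net_deepen W2' _ Nf); nia.
move=> x y hx hy.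
have itG : forall k a b, iter k Gf (col_mx a b) = col_mx (iter k F a) (iter k F b).
  by elim=> [|k IH] a b //=; rewrite IH /Gf col_mxKu col_mxKd.
rewrite mxE /E2f vec2_0 vec2_1 itG /Kf col_mxKu col_mxKd.
by rewrite part1.
Qed.
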